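(* Every IC and IR mechanism that is not floor-randomized is dominated by a floor-randomized mechanism.
   Context: Setting. Let $\Theta=[\underline\theta,\overline\theta]$ with $0<\underline\theta<\overline\theta$. Let $c>0$ and let $P:\mathbb R_+\to\mathbb R_+$ be continuous and strictly decreasing with $P(\overline q)=0$ for some $\overline q>0$. Put $V(q)=\int_0^q P(z)\,dz$ and $\mathrm{TS}(\theta,q)=V(q)-c-\theta q$ for $q>0$, $\mathrm{TS}(\theta,0)=0$. Assume (A2): $\mathrm{TS}(\overline\theta,P^{-1}(\overline\theta))>0$. A mechanism is a triple $M=(r,q,u)$ of functions $r:\Theta\to[0,1]$, $q:\Theta\to[0,\overline q]$, $u:\Theta\to\mathbb R$ with $q(\theta)=0$ if and only if $r(\theta)=0$. It is IC if $u(\theta)\ge u(\theta')+(\theta'-\theta)q(\theta')r(\theta')$ for all $\theta,\theta'\in\Theta$, and IR if $u(\theta)\ge 0$ for all $\theta$. (Known fact: $M$ is IC iff $\theta\mapsto q(\theta)r(\theta)$ is nonincreasing and $u(\theta)=u(\overline\theta)+\int_\theta^{\overline\theta}q(z)r(z)\,dz$ for all $\theta$; an IC mechanism is IR iff $u(\overline\theta)\ge0$.) Fix $\alpha\in[0,1)$. The regulator's surplus at $\theta$ is $\mathrm{RS}_\alpha(\theta,M)=r(\theta)\,\mathrm{TS}(\theta,q(\theta))-(1-\alpha)u(\theta)$. An IC and IR mechanism $\tilde M$ dominates an IC and IR mechanism $M$ if $\mathrm{RS}_\alpha(\theta,\tilde M)\ge \mathrm{RS}_\alpha(\theta,M)$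 for all $\theta\in\Theta$ with strict inequality for some $\theta$; $M$ is undominated if it is IC, IR and not dominated by any IC and IR mechanism. The quantity floor $\hat q$ is the unique $q>0$ with $V(q)-qP(q)=c$. A mechanism $(r,q,u)$ is floor-randomized if it is IC, IR, $u(\overline\theta)=0$, and $\Theta$ can be partitioned into three pairwise disjoint (possibly empty) intervals $\Theta_1,\Theta_{01},\Theta_0$, with every element of $\Theta_0$ larger than every element of $\Theta_{01}$ and every element of $\Theta_{01}$ larger than every element of $\Theta_1$, such that: $q(\theta)\ge\hat q$ and $r(\theta)=1$ for $\theta\in\Theta_1$; $q(\theta)=\hat q$ and $r(\theta)\in(0,1)$ for $\theta\in\Theta_{01}$; $q(\theta)=r(\theta)=0$ for $\theta\in\Theta_0$. *)

(* Defs.v *)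
From Stdlib Require Import Reals.
From Coquelicot Require Import Coquelicot.
Open Scope R_scope.

Definition V (P : R -> R) (q : R) : R := RInt P 0 q.

Definition TS (P : R -> R) (c theta q : R) : R :=
  if Rle_dec q 0 then 0 else V P q - c - theta * q.

Definition inTheta (thl thh th : R) : Prop := thl <= th <= thh.

Definition is_mechanism (thl thh qbar : R) (r q u : R -> R) : Prop :=
  forall th, inTheta thl thh th ->
    0 <= r th <= 1 /\ 0 <= q th <= qbar /\ (q th = 0 <-> r th = 0).

Definition IC (thl thh : R) (r q u : R -> R) : Prop :=
  forall th th', inTheta thl thh th -> inTheta thl thh th' ->
    u th >= u th' + (th' - th) * q th' * r th'.

Definition IR (thl thh : R) (u : R -> R) : Prop :=
  forall th, inTheta thl thh th -> u th >= 0.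

Definition IC_IR (thl thh qbar : R) (r q u : R -> R) : Prop :=
  is_mechanism thl thh qbar r q u /\ IC thl thh r q u /\ IR thl thh u.

Definition RS (P : R -> R) (c alpha th : R) (r q u : R -> R) : R :=
  r th * TS P c th (q th) - (1 - alpha) * u th.

Definition dominates (P : R -> R) (c alpha thl thh qbar : R)
    (r' q' u' r q u : R -> R) : Prop :=
  IC_IR thl thh qbar r' q' u' /\ IC_IR thl thh qbar r q u /\
  (forall th, inTheta thl thh th ->
     RS P c alpha th r' q' u' >= RS P c alpha th r q u) /\
  (exists th, inTheta thl thh th /\
     RS P c alpha th r' q' u' > RS P c alpha th r q u).

Definition is_quantity_floor (P : R -> R) (c qhat : R) : Prop :=
  0 < qhat /\ V P qhat - qhat * P qhat = c /\
  (forall q, 0 < q -> V P q - q * P q = c -> q = qhat).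

Definition is_interval (S : R -> Prop) : Prop :=
  forall x y z, S x -> S y -> x <= z <= y -> S z.

Definition floor_randomized (thl thh qbar qhat : R) (r q u : R -> R) : Prop :=
  IC_IR thl thh qbar r q u /\ u thh = 0 /\
  exists S1 S01 S0 : R -> Prop,
    is_interval S1 /\ is_interval S01 /\ is_interval S0 /\
    (forall th, S1 th \/ S01 th \/ S0 th -> inTheta thl thh th) /\
    (forall th, inTheta thl thh th -> S1 th \/ S01 th \/ S0 th) /\
    (forall th, ~ (S1 th /\ S01 th)) /\
    (forall th, ~ (S1 th /\ S0 th)) /\
    (forall th, ~ (S01 th /\ S0 th)) /\
    (forall x y, S0 x -> S01 y -> y < x) /\
    (forall x y, S01 x -> S1 y -> y < x) /\
    (forall th, S1 th -> q th >= qhat /\ r th = 1) /\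
    (forall th, S01 th -> q th = qhat /\ 0 < r th < 1) /\
    (forall th, S0 th -> q th = 0 /\ r th = 0).

(* Main.v *)
Require Import Defs.
From Stdlib Require Import Reals Lra Classical.
From Coquelicot Require Import Coquelicot.
Open Scope R_scope.

Lemma Rmax0_cont (x : R) : continuity_pt (fun y => Rmax y 0) x.
Proof.
  apply continuity_pt_locally. intros eps. exists eps. intros y Hy.
  change (Rabs (y - x) < eps) in Hy.
  unfold Rmax; destruct (Rle_dec y 0); destruct (Rle_dec x 0);
  unfold Rabs in *; repeat destruct Rcase_abs; lra.
Qed.

Section An.
Variable P : R -> R.
Hypothesis HPcont : forall x, 0 <= x ->
     filterlim P (within (fun y => 0 <= y) (locally x)) (locally (P x)).

Definition Pt (y : R) := P (Rmax y 0).

Lemma Pt_cont x : continuous Pt x.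
Proof.
  unfold Pt, continuous.
  eapply filterlim_comp with (G := within (fun y => 0 <= y) (locally (Rmax x 0))).
  - intros Q HQ. unfold within in HQ.
    pose proof (proj1 (continuity_pt_filterlim _ _) (Rmax0_cont x)) as H.
    specialize (H _ HQ). unfold filtermap in *.
    eapply filter_imp; [|exact H]. intros y Hy. apply Hy. apply Rmax_r.
  - apply HPcont. apply Rmax_r.
Qed.

Lemma Pt_ex a b : ex_RInt Pt a b.
Proof. apply (@ex_RInt_continuous R_CompleteNormedModule). intros; apply Pt_cont. Qed.

Lemma V_Pt q : 0 <= q -> V P q = RInt Pt 0 q.
Proof.
  intros Hq. unfold V. apply RInt_ext. intros x Hx.
  rewrite Rmin_left in Hx by lra. unfold Pt. rewrite Rmax_left by lra. reflexivity.
Qed.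

Lemma V_diff a b : 0 <= a -> 0 <= b -> V P b - V P a = RInt Pt a b.
Proof.
  intros Ha Hb. rewrite !V_Pt by auto.
  rewrite <- (RInt_Chasles Pt 0 a b) by apply Pt_ex.
  unfold plus; simpl. ring.
Qed.

Lemma V_cont x : continuity_pt (fun q => RInt Pt 0 q) x.
Proof.
  apply continuity_pt_filterlim.
  apply (continuous_RInt_1 Pt 0 x (fun q => RInt Pt 0 q)).
  apply filter_forall. intros z. apply (@RInt_correct R_CompleteNormedModule). apply Pt_ex.
Qed.

Lemma Pt_cont_pt x : continuity_pt Pt x.
Proof. apply continuity_pt_filterlim. apply Pt_cont. Qed.
End An.

Section B.
Variable P : R -> R.
Variables c qbar : R.
Hypothesis HPcont : forall x, 0 <= x ->
     filterlim P (within (fun y => 0 <= y) (locally x)) (locally (P x)).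
Hypothesis HPdec : forall x y, 0 <= x -> x < y -> y <= qbar -> P y < P x.

Lemma F1 a b : 0 <= a -> a < b -> b <= qbar ->
  (b - a) * P b < V P b - V P a < (b - a) * P a.
Proof.
  intros Ha Hab Hb. rewrite (V_diff P HPcont) by lra.
  assert (E : forall k, RInt (fun _ => k) a b = (b - a) * k).
  { intros k. rewrite RInt_const. reflexivity. }
  split.
  - rewrite <- E. apply RInt_lt; auto.
    + intros; apply Pt_cont; auto.
    + intros; apply continuous_const.
    + intros x Hx. unfold Pt. rewrite Rmax_left by lra. apply HPdec; lra.
  - rewrite <- E. apply RInt_lt; auto.
    + intros; apply continuous_const.
    + intros; apply Pt_cont; auto.
    + intros x Hx. unfold Pt. rewrite Rmax_left by lra. apply HPdec; lra.
Qed.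

Lemma qhat_le (qhat qm : R) :
  0 < qm -> qm <= qbar -> V P qm - qm * P qm > c -> 0 < c ->
  is_quantity_floor P c qhat -> qhat <= qm.
Proof.
  intros Hqm Hqb Hk Hc [Hq0 [Hqe Hqu]].
  set (K := fun y => RInt (Pt P) 0 y - y * Pt P y - c).
  assert (Kc : continuity K).
  { intros x. unfold K.
    apply continuity_pt_minus; [apply continuity_pt_minus|].
    - apply V_cont; auto.
    - apply continuity_pt_mult. apply continuity_pt_id. apply Pt_cont_pt; auto.
    - apply continuity_pt_const. intros u v; reflexivity. }
  assert (K0 : K 0 < 0).
  { unfold K. rewrite RInt_point. unfold zero; simpl. lra. }
  assert (Kq : 0 < K qm).
  { unfold K. rewrite <- V_Pt by (auto; lra). unfold Pt. rewrite Rmax_left by lra. lra. }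
  destruct (IVT K 0 qm Kc Hqm K0 Kq) as [z [Hz Kz]].
  assert (z <> 0). { intros ->. lra. }
  assert (Vz : V P z - z * P z = c).
  { unfold K in Kz. rewrite <- V_Pt in Kz by (auto; lra). unfold Pt in Kz.
    rewrite Rmax_left in Kz by lra. lra. }
  rewrite <- (Hqu z) by (auto; lra). lra.
Qed.
End B.
Section C.
Variable P : R -> R.
Variables c qbar qhat : R.
Hypothesis HPdec : forall x y, 0 <= x -> x < y -> y <= qbar -> P y < P x.
Hypothesis HF1 : forall a b, 0 <= a -> a < b -> b <= qbar ->
  (b - a) * P b < V P b - V P a < (b - a) * P a.
Hypothesis Hqh : 0 < qhat <= qbar.
Hypothesis Hqe : V P qhat - qhat * P qhat = c.

Lemma kmono a b : 0 <= a -> a < b -> b <= qbar ->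
  V P a - a * P a < V P b - b * P b.
Proof.
  intros Ha Hab Hb. destruct (HF1 a b Ha Hab Hb) as [H1 H2].
  assert (P b < P a) by (apply HPdec; lra).
  assert (a * P b <= a * P a) by (apply Rmult_le_compat_l; lra). nra.
Qed.

Lemma k_le q : 0 <= q -> q <= qhat -> V P q - q * P q <= c.
Proof.
  intros. destruct (Req_dec q qhat). subst; lra.
  pose proof (kmono q qhat); lra.
Qed.

Lemma k_ge q : qhat <= q -> q <= qbar -> c <= V P q - q * P q.
Proof.
  intros. destruct (Req_dec q qhat). subst; lra.
  pose proof (kmono qhat q); lra.
Qed.

Lemma G1 a b : 0 < a -> a < b -> b <= qhat ->
  a * (V P b - c) - b * (V P a - c) > 0.
Proof.
  intros. destruct (HF1 a b) as [HH1 HH2]; try lra.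
  pose proof (k_le b). 
  assert (E : a * (V P b - c) - b * (V P a - c) = b * (V P b - V P a) - (b - a) * (V P b - c)) by ring.
  rewrite E.
  assert (b * (V P b - V P a) > b * ((b - a) * P b)) by (apply Rmult_lt_compat_l; lra).
  assert ((b - a) * (b * P b - V P b + c) >= 0).
  { apply Rle_ge, Rmult_le_pos; lra. }
  nra.
Qed.

Lemma G2 a b : qhat <= a -> a < b -> b <= qbar ->
  a * (V P b - c) - b * (V P a - c) < 0.
Proof.
  intros. destruct (HF1 a b) as [HH1 HH2]; try lra.
  pose proof (k_ge a). 
  assert (E : a * (V P b - c) - b * (V P a - c) = a * (V P b - V P a) + (b - a) * (c - V P a)) by ring.
  rewrite E.
  assert (a * (V P b - V P a) < a * ((b - a) * P a)) by (apply Rmult_lt_compat_l; lra).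
  assert ((b - a) * (a * P a + c - V P a) <= 0).
  { assert (0 <= b - a) by lra; assert (a * P a + c - V P a <= 0) by lra; nra. }
  nra.
Qed.

Definition rN x := if Rle_dec x 0 then 0 else if Rlt_dec x qhat then x / qhat else 1.
Definition qN x := if Rle_dec x 0 then 0 else if Rlt_dec x qhat then qhat else x.

Lemma surplus th r q :
  0 <= r <= 1 -> 0 <= q <= qbar -> (q = 0 <-> r = 0) ->
  rN (q * r) * TS P c th (qN (q * r)) >= r * TS P c th q /\
  ((rN (q * r) <> r \/ qN (q * r) <> q) ->
     rN (q * r) * TS P c th (qN (q * r)) > r * TS P c th q).
Proof.
  intros Hr Hq Hqr. unfold rN, qN.
  destruct (Rle_dec (q * r) 0) as [Hx|Hx].
  - assert (q * r = 0) by nra.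
    assert (r = 0) by (destruct (Rmult_integral _ _ H); [apply Hqr|]; auto).
    assert (q = 0) by (apply Hqr; auto). subst.
    split; [lra|]. intros [H1|H1]; lra.
  - assert (q <> 0) by (intros ->; lra).
    assert (r <> 0) by (intros ->; lra).
    assert (Hq0 : 0 < q) by lra. assert (Hr0 : 0 < r) by lra.
    unfold TS. destruct (Rle_dec q 0); [lra|].
    destruct (Rlt_dec (q * r) qhat) as [Hl|Hl].
    + destruct (Rle_dec qhat 0); [lra|].
      set (D := q * (V P qhat - c) - qhat * (V P q - c)).
      assert (E : q * r / qhat * (V P qhat - c - th * qhat) - r * (V P q - c - th * q)
                  = r / qhat * D) by (unfold D; field; lra).
      assert (Dpos : q <> qhat -> D > 0).
      { intros Hne. unfold D. destruct (Rlt_dec q qhat).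
        - pose proof (G1 q qhat); lra.
        - pose proof (G2 qhat q); lra. }
      assert (Dnn : D >= 0).
      { destruct (Req_dec q qhat). unfold D; subst; right; ring. pose proof (Dpos H1); lra. }
      assert (rq : r / qhat > 0) by (apply Rdiv_lt_0_compat; lra).
      split.
      * assert (r / qhat * D >= 0) by (apply Rle_ge, Rmult_le_pos; lra). lra.
      * intros Hne. assert (q <> qhat).
        { intros ->. destruct Hne as [Hne|Hne]; apply Hne; try field; lra. }
        assert (r / qhat * D > 0) by (apply Rmult_lt_0_compat; [lra|apply Dpos; auto]). lra.
    + destruct (Rle_dec (q * r) 0); [lra|].
      assert (Hxq : q * r <= q) by nra.
      set (D := q * (V P (q * r) - c) - q * r * (V P q - c)).
      assert (E : 1 * (V P (q * r) - c - th * (q * r)) - r * (V P q - c - th * q)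
                  = / q * D) by (unfold D; field; lra).
      assert (Dpos : q * r < q -> D > 0).
      { intros Hlt. unfold D. pose proof (G2 (q * r) q); lra. }
      assert (Dnn : D >= 0).
      { destruct (Req_dec (q * r) q) as [He|He]. unfold D; rewrite He; right; ring.
        pose proof (Dpos ltac:(lra)); lra. }
      assert (/ q > 0) by (apply Rinv_0_lt_compat; lra).
      split.
      * assert (/ q * D >= 0) by (apply Rle_ge, Rmult_le_pos; lra). lra.
      * intros Hne. assert (q * r < q).
        { destruct Hne as [Hne|Hne].
          - assert (r < 1) by lra. nra.
          - lra. }
        assert (/ q * D > 0) by (apply Rmult_lt_0_compat; [lra|apply Dpos; auto]). lra.
Qed.
End C.

Section D.
Variables qbar qhat : R.
Hypothesis Hqh : 0 < qhat <= qbar.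

Lemma N_facts x : 0 <= x <= qbar ->
  0 <= rN qhat x <= 1 /\ 0 <= qN qhat x <= qbar /\ (qN qhat x = 0 <-> rN qhat x = 0)
  /\ qN qhat x * rN qhat x = x.
Proof.
  intros Hx. unfold rN, qN. destruct (Rle_dec x 0).
  - repeat split; lra.
  - destruct (Rlt_dec x qhat).
    + assert (0 < x / qhat) by (apply Rdiv_lt_0_compat; lra).
      assert (x / qhat < 1) by (unfold Rdiv; apply (Rmult_lt_reg_r qhat); [lra|]; rewrite Rmult_assoc, Rinv_l, Rmult_1_r, Rmult_1_l by lra; lra).
      repeat split; try lra. field; lra.
    + repeat split; lra.
Qed.
End D.

Theorem theorem1
  (thl thh c alpha qbar qhat : R) (P : R -> R)
  (Hth : 0 < thl < thh)
  (Hc : 0 < c)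
  (Halpha : 0 <= alpha < 1)
  (Hqbar : 0 < qbar)
  (HPnonneg : forall x, 0 <= x -> 0 <= P x)
  (HPcont : forall x, 0 <= x ->
     filterlim P (within (fun y => 0 <= y) (locally x)) (locally (P x)))
  (HPdec : forall x y, 0 <= x -> x < y -> y <= qbar -> P y < P x)
  (HPqbar : P qbar = 0)
  (HA2 : exists qm, 0 < qm < qbar /\ P qm = thh /\ TS P c thh qm > 0)
  (Hqhat : is_quantity_floor P c qhat) :
  forall r q u : R -> R,
    IC_IR thl thh qbar r q u ->
    ~ floor_randomized thl thh qbar qhat r q u ->
    exists r' q' u' : R -> R,
      floor_randomized thl thh qbar qhat r' q' u' /\
      dominates P c alpha thl thh qbar r' q' u' r q u.
Proof.
  intros r q u Hold Hnfr.
  pose proof Hold as [Hm [Hic Hir]].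
  destruct HA2 as [qm [Hqm [HPqm HTS]]].
  assert (Hqh : 0 < qhat <= qbar).
  { pose proof Hqhat as [Hq0 _]. split; auto.
    unfold TS in HTS. destruct (Rle_dec qm 0); [lra|].
    pose proof (qhat_le P c qbar HPcont qhat qm ltac:(lra) ltac:(lra) ltac:(rewrite HPqm; lra) Hc Hqhat).
    lra. }
  destruct Hqhat as [_ [Hqe _]].
  pose proof (F1 P qbar HPcont HPdec) as HF1.
  set (x := fun th => q th * r th).
  assert (Hthh : inTheta thl thh thh) by (unfold inTheta; lra).
  assert (Hxb : forall th, inTheta thl thh th -> 0 <= x th <= qbar).
  { intros th Ht. destruct (Hm th Ht) as [Hr [Hq _]]. unfold x. split; nra. }
  assert (Hmono : forall a b, inTheta thl thh a -> inTheta thl thh b -> a <= b -> x b <= x a).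
  { intros a b Ha Hb Hab. destruct (Req_dec a b). subst; lra.
    pose proof (Hic a b Ha Hb). pose proof (Hic b a Hb Ha). unfold x.
    assert ((b - a) * (q b * r b - q a * r a) <= 0) by nra.
    destruct (Rle_dec (q b * r b) (q a * r a)); auto. 
    assert ((b - a) * (q b * r b - q a * r a) > 0) by (apply Rmult_lt_0_compat; lra). lra. }
  assert (Hu : forall th, inTheta thl thh th -> u th - u thh >= 0).
  { intros th Ht. pose proof (Hic th thh Ht Hthh). pose proof (Hxb thh Hthh).
    unfold inTheta in Ht. unfold x in *. nra. }
  assert (FR : forall r2 q2 u2 : R -> R,
    (forall th, inTheta thl thh th ->
       r2 th = rN qhat (x th) /\ q2 th = qN qhat (x th) /\ u2 th = u th - u thh) ->
    floor_randomized thl thh qbar qhat r2 q2 u2).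
  { intros r2 q2 u2 E.
    split; [split; [|split]|split].
    - intros th Ht. destruct (E th Ht) as [-> [-> _]].
      destruct (N_facts qbar qhat Hqh (x th) (Hxb th Ht)) as [A1 [A2 [A3 _]]]. auto.
    - intros th th' Ht Ht'. destruct (E th Ht) as [_ [_ ->]]. destruct (E th' Ht') as [-> [-> ->]].
      destruct (N_facts qbar qhat Hqh (x th') (Hxb th' Ht')) as [_ [_ [_ A4]]].
      rewrite Rmult_assoc, A4. pose proof (Hic th th' Ht Ht'). unfold x in *. lra.
    - intros th Ht. destruct (E th Ht) as [_ [_ ->]]. auto.
    - destruct (E thh Hthh) as [_ [_ ->]]. ring.
    - exists (fun th => inTheta thl thh th /\ x th >= qhat),
             (fun th => inTheta thl thh th /\ 0 < x th < qhat),
             (fun th => inTheta thl thh th /\ x th <= 0).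
      unfold is_interval, inTheta in *.
      split; [|split; [|split; [|split; [|split; [|split; [|split; [|split; [|split; [|split; [|split; [|split]]]]]]]]]]].
      + intros a b z [Ha Ha'] [Hb Hb'] Hz. split; [lra|].
        pose proof (Hmono z b ltac:(lra) Hb ltac:(lra)). lra.
      + intros a b z [Ha Ha'] [Hb Hb'] Hz. split; [lra|].
        pose proof (Hmono z b ltac:(lra) Hb ltac:(lra)).
        pose proof (Hmono a z Ha ltac:(lra) ltac:(lra)). lra.
      + intros a b z [Ha Ha'] [Hb Hb'] Hz. split; [lra|].
        pose proof (Hmono a z Ha ltac:(lra) ltac:(lra)). lra.
      + intros th [[H _]|[[H _]|[H _]]]; auto.
      + intros th Ht. destruct (Rle_dec (x th) 0); [right; right; auto|].
        destruct (Rlt_dec (x th) qhat); [right; left; split; auto; lra|left; split; auto; lra].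
      + intros th [[_ H1] [_ H2]]; lra.
      + intros th [[_ H1] [_ H2]]; lra.
      + intros th [[_ H1] [_ H2]]; lra.
      + intros a b [Ha Ha'] [Hb Hb']. destruct (Rlt_le_dec b a); auto.
        pose proof (Hmono a b Ha Hb r0). lra.
      + intros a b [Ha Ha'] [Hb Hb']. destruct (Rlt_le_dec b a); auto.
        pose proof (Hmono a b Ha Hb r0). lra.
      + intros th [Ht Hx]. destruct (E th Ht) as [-> [-> _]]. unfold rN, qN.
        destruct (Rle_dec (x th) 0); [lra|]. destruct (Rlt_dec (x th) qhat); [lra|]. lra.
      + intros th [Ht Hx]. destruct (E th Ht) as [-> [-> _]]. unfold rN, qN.
        destruct (Rle_dec (x th) 0); [lra|]. destruct (Rlt_dec (x th) qhat); [|lra].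
        split; auto.
        destruct (N_facts qbar qhat Hqh (x th) (Hxb th Ht)) as [[A1 A1'] _].
        unfold rN in A1, A1'. destruct (Rle_dec (x th) 0); [lra|]. destruct (Rlt_dec (x th) qhat); [|lra].
        assert (0 < x th / qhat) by (apply Rdiv_lt_0_compat; lra).
        split; auto. destruct A1'; auto. exfalso.
        assert (x th = qhat) by (apply (f_equal (fun z => z * qhat)) in H0; field_simplify in H0; lra).
        lra.
      + intros th [Ht Hx]. destruct (E th Ht) as [-> [-> _]]. unfold rN, qN.
        destruct (Rle_dec (x th) 0); [|lra]. lra. }
  exists (fun th => rN qhat (x th)), (fun th => qN qhat (x th)), (fun th => u th - u thh).
  assert (Hnew : floor_randomized thl thh qbar qhat
     (fun th => rN qhat (x th)) (fun th => qN qhat (x th)) (fun th => u th - u thh)).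
  { apply FR. intros; auto. }
  split; auto.
  assert (Hsur : forall th, inTheta thl thh th ->
     rN qhat (x th) * TS P c th (qN qhat (x th)) >= r th * TS P c th (q th) /\
     ((rN qhat (x th) <> r th \/ qN qhat (x th) <> q th) ->
       rN qhat (x th) * TS P c th (qN qhat (x th)) > r th * TS P c th (q th))).
  { intros th Ht. destruct (Hm th Ht) as [Hr [Hq Hqr]].
    apply (surplus P c qbar qhat HPdec HF1 Hqh Hqe); auto. }
  split; [apply Hnew|]. split; auto. unfold RS. split.
  - intros th Ht. destruct (Hsur th Ht) as [S _]. pose proof (Hir thh Hthh). nra.
  - destruct (Rle_lt_dec (u thh) 0) as [Hu0|Hu0].
    + assert (Hu0' : u thh = 0) by (pose proof (Hir thh Hthh); lra).
      destruct (classic (exists th, inTheta thl thh th /\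
                   (rN qhat (x th) <> r th \/ qN qhat (x th) <> q th))) as [[th [Ht Hne]]|Hno].
      * exists th. split; auto. destruct (Hsur th Ht) as [_ S]. specialize (S Hne).
        rewrite Hu0'. lra.
      * exfalso. apply Hnfr. apply FR. intros th Ht.
        rewrite Hu0', Rminus_0_r. split; [|split; auto].
        -- destruct (Req_dec (r th) (rN qhat (x th))); auto. exfalso; apply Hno; eauto.
        -- destruct (Req_dec (q th) (qN qhat (x th))); auto. exfalso; apply Hno; eauto.
    + exists thh. split; auto. destruct (Hsur thh Hthh) as [S _].
      assert ((1 - alpha) * u thh > 0) by (apply Rmult_lt_0_compat; lra). nra.
Qed.
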